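(* Let $S^0$ be an adequate semigroup with semilattice of idempotents $E^0$. Let $L$ be a left adequate semigroup and $R$ a right adequate semigroup and suppose that $S^0$ is a common quasi-ideal adequate transversal of $L$ and $R$. For $x\in L$ write $x=e_x\overline{x}f_x$ and for $a\in R$ write $a=e_a\overline{a}f_a$ for the factorisations given by the transversal $S^0$ (so $\overline{x},\overline{a}\in S^0$, $e_x\in E(L)$, $f_x\in E^0$, $e_a\in E^0$, $f_a\in E(R)$). Let $R\times L\to S^0$ be a map denoted by $(a,x)\mapsto a\ast x$ and suppose that $\ast$ satisfies (1) for all $y,z\in L$, $a,b\in R$ with $\overline{y}=\overline{b}$, $(a\ast y)f_b\ast z = a\ast e_y(b\ast z)$; (2) if $a\in S^0$ or $x\in S^0$ then $a\ast x = ax$. Let $T = \{(x,a)\in L\times R : \overline{x} = \overline{a}\}$ and define $(x,a)(y,b)=(e_x(a\ast y),(a\ast y)f_b)$. Then $T$ is an abundant semigroup with a quasi-ideal adequate transversal $T^0=\{(s,s):s\in S^0\}$ with $T^0\cong S^0$. Moreover every abundant semigroup with a quasi-ideal adequate transversal can be constructed (up to isomorphism) in this way.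
   Context: A semigroup is abundant if every ${\cal R}^\ast$-class and every ${\cal L}^\ast$-class contains an idempotent; it is adequate if moreover its idempotents commute; it is left (resp. right) adequate if it is abundant and every ${\cal R}^\ast$-class (resp. ${\cal L}^\ast$-class) contains a unique idempotent. For $a$ in an adequate semigroup, $a^+$ and $a^\ast$ denote the unique idempotents in the ${\cal R}^\ast$- and ${\cal L}^\ast$-classes of $a$. An adequate $\ast$-subsemigroup $S^0$ of an abundant semigroup $S$ is an adequate transversal if each $x\in S$ has a unique $\overline{x}\in S^0$ and idempotents $e_x,f_x\in E(S)$ with $x=e_x\overline{x}f_x$, $e_x\,{\cal L}\,\overline{x}^+$, $f_x\,{\cal R}\,\overline{x}^\ast$ ($e_x,f_x$ are then uniquely determined). $S^0$ is a quasi-ideal if $S^0SS^0\subseteq S^0$. *)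

(* Defs.v *)
From Stdlib Require Import Logic.FunctionalExtensionality.

Record semigroup := Semigroup {
  carrier :> Type;
  sop : carrier -> carrier -> carrier;
  sassoc : forall x y z, sop x (sop y z) = sop (sop x y) z }.

Arguments sop {s} _ _.
Notation "x ⋅ y" := (sop x y) (at level 40, left associativity).

Section Defs.
Variable S : semigroup.

Definition idem (e : S) : Prop := e ⋅ e = e.

(* multiplication by an element of S^1 = S + {1}; None is the adjoined 1 *)
Definition lmul1 (u : option S) (a : S) : S :=
  match u with None => a | Some u => u ⋅ a end.
Definition rmul1 (a : S) (u : option S) : S :=
  match u with None => a | Some u => a ⋅ u end.

Definition RStar (a b : S) : Prop :=
  forall u v : option S, lmul1 u a = lmul1 v a <-> lmul1 u b = lmul1 v b.
Definition LStar (a b : S) : Prop :=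
  forall u v : option S, rmul1 a u = rmul1 a v <-> rmul1 b u = rmul1 b v.

Definition GreenL (a b : S) : Prop :=
  (exists u, a = lmul1 u b) /\ (exists v, b = lmul1 v a).
Definition GreenR (a b : S) : Prop :=
  (exists u, a = rmul1 b u) /\ (exists v, b = rmul1 a v).

Definition abundant : Prop :=
  forall a : S, (exists e, idem e /\ RStar a e) /\ (exists f, idem f /\ LStar a f).
Definition adequate : Prop :=
  abundant /\ forall e f, idem e -> idem f -> e ⋅ f = f ⋅ e.
Definition left_adequate : Prop :=
  abundant /\ forall a e f, idem e -> idem f -> RStar a e -> RStar a f -> e = f.
Definition right_adequate : Prop :=
  abundant /\ forall a e f, idem e -> idem f -> LStar a e -> LStar a f -> e = f.

Definition is_plus (a p : S) : Prop := idem p /\ RStar a p.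
Definition is_star (a q : S) : Prop := idem q /\ LStar a q.
End Defs.

Arguments idem {S}. Arguments RStar {S}. Arguments LStar {S}.
Arguments GreenL {S}. Arguments GreenR {S}.
Arguments is_plus {S}. Arguments is_star {S}.

(* A subsemigroup S0 of S is represented by an injective homomorphism j : S0 -> S *)
Section Sub.
Variables (S0 S : semigroup) (j : S0 -> S).

Definition hom : Prop := forall s t, j (s ⋅ t) = j s ⋅ j t.
Definition injective : Prop := forall s t, j s = j t -> s = t.

Definition star_subsemigroup : Prop :=
  forall s : S0, (exists e, idem e /\ RStar (j s) (j e))
              /\ (exists f, idem f /\ LStar (j s) (j f)).

Definition factors_through (x : S) (s : S0) (e f : S) : Prop :=
  idem e /\ idem f /\ x = e ⋅ j s ⋅ f /\
  (exists p, is_plus s p /\ GreenL e (j p)) /\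
  (exists q, is_star s q /\ GreenR f (j q)).

Definition adequate_transversal : Prop :=
  hom /\ injective /\ adequate S0 /\ star_subsemigroup /\
  forall x : S, exists! s : S0, exists e f : S, factors_through x s e f.

Definition quasi_ideal : Prop :=
  forall (s t : S0) (x : S), exists u : S0, j s ⋅ x ⋅ j t = j u.

Definition factorisation (bar : S -> S0) (e f : S -> S) : Prop :=
  forall x, factors_through x (bar x) (e x) (f x).
End Sub.

Arguments hom {S0 S}. Arguments injective {S0 S}.
Arguments adequate_transversal {S0 S}. Arguments quasi_ideal {S0 S}.
Arguments factorisation {S0 S}.

Definition iso_onto (S : semigroup) (A : Type) (P : A -> Prop)
  (m : A -> A -> A) (phi : S -> A) : Prop :=
  (forall u v, phi u = phi v -> u = v) /\ (forall u, P (phi u)) /\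
  (forall p, P p -> exists u, phi u = p) /\
  (forall u v, phi (u ⋅ v) = m (phi u) (phi v)).

Section Construction.
Variables (S0 L R : semigroup) (iL : S0 -> L) (iR : S0 -> R)
  (barL : L -> S0) (eL fL : L -> L) (barR : R -> S0) (eR fR : R -> R)
  (st : R -> L -> S0).

(* conditions (1) and (2) on the map (a, x) |-> a * x = st a x *)
Definition star_axioms : Prop :=
  (forall (y z : L) (a b : R), barL y = barR b ->
     st (iR (st a y) ⋅ fR b) z = st a (eL y ⋅ iL (st b z))) /\
  (forall (s : S0) (x : L), iL (st (iR s) x) = iL s ⋅ x) /\
  (forall (a : R) (t : S0), iR (st a (iL t)) = a ⋅ iR t).

Definition construction_setting : Prop :=
  adequate S0 /\ left_adequate L /\ right_adequate R /\
  adequate_transversal iL /\ quasi_ideal iL /\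
  adequate_transversal iR /\ quasi_ideal iR /\
  factorisation iL barL eL fL /\ factorisation iR barR eR fR /\
  star_axioms.

Definition inT (p : L * R) : Prop := barL (fst p) = barR (snd p).
Definition tmul (p q : L * R) : L * R :=
  (eL (fst p) ⋅ iL (st (snd p) (fst q)), iR (st (snd p) (fst q)) ⋅ fR (snd q)).
End Construction.
Arguments iso_onto S {A}.

(* Main.v *)
Require Import Defs.
From Stdlib Require Import ClassicalEpsilon ProofIrrelevance.

Ltac an := repeat rewrite sassoc.

Section Basic.
Variable S : semigroup.

Lemma mul_rw (x y z w : S) : y ⋅ z = w -> x ⋅ y ⋅ z = x ⋅ w.
Proof. intros H; rewrite <- sassoc, H; reflexivity. Qed.
Lemma mul_rw3 (x a b c w : S) : a ⋅ b ⋅ c = w -> x ⋅ a ⋅ b ⋅ c = x ⋅ w.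
Proof. intros H; rewrite <- H; an; reflexivity. Qed.

Lemma mul_rw4 (x a b c d w : S) : a ⋅ b ⋅ c ⋅ d = w -> x ⋅ a ⋅ b ⋅ c ⋅ d = x ⋅ w.
Proof. intros H; rewrite <- H; an; reflexivity. Qed.

Lemma lmul1_assoc u (a b : S) : lmul1 S u (a ⋅ b) = lmul1 S u a ⋅ b.
Proof. destruct u; simpl; auto using sassoc. Qed.
Lemma rmul1_assoc u (a b : S) : rmul1 S (a ⋅ b) u = a ⋅ rmul1 S b u.
Proof. destruct u; simpl; auto. symmetry; apply sassoc. Qed.

Lemma RStar_refl (a:S) : RStar a a. Proof. intros u v; tauto. Qed.
Lemma RStar_sym (a b:S) : RStar a b -> RStar b a.
Proof. intros H u v; specialize (H u v); tauto. Qed.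
Lemma RStar_trans (a b c:S) : RStar a b -> RStar b c -> RStar a c.
Proof. intros H1 H2 u v; specialize (H1 u v); specialize (H2 u v); tauto. Qed.
Lemma LStar_refl (a:S) : LStar a a. Proof. intros u v; tauto. Qed.
Lemma LStar_sym (a b:S) : LStar a b -> LStar b a.
Proof. intros H u v; specialize (H u v); tauto. Qed.
Lemma LStar_trans (a b c:S) : LStar a b -> LStar b c -> LStar a c.
Proof. intros H1 H2 u v; specialize (H1 u v); specialize (H2 u v); tauto. Qed.

Lemma RStar_cancel (a p u v : S) : RStar a p -> u ⋅ a = v ⋅ a -> u ⋅ p = v ⋅ p.
Proof. intros H E. exact (proj1 (H (Some u) (Some v)) E). Qed.
Lemma RStar_cancel1 (a p v : S) : RStar a p -> a = v ⋅ a -> p = v ⋅ p.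
Proof. intros H E. exact (proj1 (H None (Some v)) E). Qed.
Lemma RStar_idem (a p : S) : idem p -> RStar a p -> p ⋅ a = a.
Proof. intros Hp H. exact (proj2 (H (Some p) None) Hp). Qed.
Lemma LStar_cancel (a q u v : S) : LStar a q -> a ⋅ u = a ⋅ v -> q ⋅ u = q ⋅ v.
Proof. intros H E. exact (proj1 (H (Some u) (Some v)) E). Qed.
Lemma LStar_cancel1 (a q v : S) : LStar a q -> a = a ⋅ v -> q = q ⋅ v.
Proof. intros H E. exact (proj1 (H None (Some v)) E). Qed.
Lemma LStar_idem (a q : S) : idem q -> LStar a q -> a ⋅ q = a.
Proof. intros Hq H. exact (proj2 (H (Some q) None) Hq). Qed.

Lemma GL_elim (e p : S) : idem e -> idem p -> GreenL e p -> e ⋅ p = e /\ p ⋅ e = p.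
Proof.
  unfold idem; intros He Hp [[u Hu] [v Hv]]; split.
  - destruct u as [u|]; simpl in Hu; rewrite Hu; [rewrite <- sassoc, Hp|]; auto.
  - destruct v as [v|]; simpl in Hv; rewrite Hv; [rewrite <- sassoc, He|]; auto.
Qed.
Lemma GL_intro (e p : S) : e ⋅ p = e -> p ⋅ e = p -> GreenL e p.
Proof. intros H1 H2; split; [exists (Some e) | exists (Some p)]; simpl; auto. Qed.
Lemma GR_elim (f q : S) : idem f -> idem q -> GreenR f q -> q ⋅ f = f /\ f ⋅ q = q.
Proof.
  unfold idem; intros Hf Hq [[u Hu] [v Hv]]; split.
  - destruct u as [u|]; simpl in Hu; rewrite Hu; [rewrite sassoc, Hq|]; auto.
  - destruct v as [v|]; simpl in Hv; rewrite Hv; [rewrite sassoc, Hf|]; auto.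
Qed.
Lemma GR_intro (f q : S) : q ⋅ f = f -> f ⋅ q = q -> GreenR f q.
Proof. intros H1 H2; split; [exists (Some f) | exists (Some q)]; simpl; auto. Qed.

Lemma R_RStar (g h : S) : g ⋅ h = h -> h ⋅ g = g -> RStar g h.
Proof.
  intros H1 H2 u v; split; intro E.
  - rewrite <- H1, !lmul1_assoc, E; reflexivity.
  - rewrite <- H2, !lmul1_assoc, E; reflexivity.
Qed.
Lemma L_LStar (g h : S) : g ⋅ h = g -> h ⋅ g = h -> LStar g h.
Proof.
  intros H1 H2 u v; split; intro E.
  - rewrite <- H2, !rmul1_assoc, E; reflexivity.
  - rewrite <- H1, !rmul1_assoc, E; reflexivity.
Qed.
Lemma R_RStar' (a b u v : S) : a = b ⋅ u -> b = a ⋅ v -> RStar a b.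
Proof.
  intros H1 H2 x y; split; intro E.
  - rewrite H2, !lmul1_assoc, E; reflexivity.
  - rewrite H1, !lmul1_assoc, E; reflexivity.
Qed.
Lemma L_LStar' (a b u v : S) : a = u ⋅ b -> b = v ⋅ a -> LStar a b.
Proof.
  intros H1 H2 x y; split; intro E.
  - rewrite H2, !rmul1_assoc, E; reflexivity.
  - rewrite H1, !rmul1_assoc, E; reflexivity.
Qed.
End Basic.

Ltac rw H := an; first [rewrite H | rewrite (mul_rw _ _ _ _ _ H) | rewrite (mul_rw3 _ _ _ _ _ _ H) | rewrite (mul_rw4 _ _ _ _ _ _ _ H)]; an.

Definition pl (S0 : semigroup) (s : S0) : S0 :=
  epsilon (inhabits s) (fun p => idem p /\ RStar s p).
Definition sr (S0 : semigroup) (s : S0) : S0 :=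
  epsilon (inhabits s) (fun p => idem p /\ LStar s p).
Arguments pl {S0}. Arguments sr {S0}.

Section Adeq.
Variable S0 : semigroup.
Hypothesis HA : adequate S0.

Lemma comm (e f : S0) : idem e -> idem f -> e ⋅ f = f ⋅ e.
Proof. apply (proj2 HA). Qed.
Lemma plus_spec (s : S0) : idem (pl s) /\ RStar s (pl s).
Proof. unfold pl, sr; apply epsilon_spec. exact (proj1 (proj1 HA s)). Qed.
Lemma star_spec (s : S0) : idem (sr s) /\ LStar s (sr s).
Proof. unfold pl, sr; apply epsilon_spec. exact (proj2 (proj1 HA s)). Qed.
Lemma plus_idem (s:S0) : idem (pl s). Proof. apply plus_spec. Qed.
Lemma star_idem (s:S0) : idem (sr s). Proof. apply star_spec. Qed.
Lemma R_unique (s p p' : S0) : idem p -> idem p' -> RStar s p -> RStar s p' -> p = p'.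
Proof.
  intros Hp Hp' H H'.
  assert (H1 : RStar p p') by (eapply RStar_trans; [apply RStar_sym, H|exact H']).
  assert (E1 : p ⋅ p' = p') by (apply RStar_idem; [exact Hp| apply RStar_sym, H1]).
  assert (E2 : p' ⋅ p = p) by (apply RStar_idem; [exact Hp'| exact H1]).
  rewrite <- E2, comm, E1; auto.
Qed.
Lemma L_unique (s p p' : S0) : idem p -> idem p' -> LStar s p -> LStar s p' -> p = p'.
Proof.
  intros Hp Hp' H H'.
  assert (H1 : LStar p p') by (eapply LStar_trans; [apply LStar_sym, H|exact H']).
  assert (E1 : p ⋅ p' = p) by (apply LStar_idem; [exact Hp'| exact H1]).
  assert (E2 : p' ⋅ p = p') by (apply LStar_idem; [exact Hp| apply LStar_sym, H1]).
  rewrite <- E1, comm, E2; auto.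
Qed.
Lemma plus_unique (s p : S0) : idem p -> RStar s p -> pl s = p.
Proof. intros; eapply R_unique; eauto; apply plus_spec. Qed.
Lemma star_unique (s p : S0) : idem p -> LStar s p -> sr s = p.
Proof. intros; eapply L_unique; eauto; apply star_spec. Qed.
Lemma plus_self (p : S0) : idem p -> pl p = p.
Proof. intros; apply plus_unique; auto using RStar_refl. Qed.
Lemma star_self (p : S0) : idem p -> sr p = p.
Proof. intros; apply star_unique; auto using LStar_refl. Qed.
Lemma plus_l (s : S0) : pl s ⋅ s = s.
Proof. apply RStar_idem; apply plus_spec. Qed.
Lemma star_r (s : S0) : s ⋅ sr s = s.
Proof. apply LStar_idem; apply star_spec. Qed.
Lemma plus_le (s u : S0) : u ⋅ s = s -> u ⋅ pl s = pl s.
Proof. intros H; symmetry; apply (RStar_cancel1 _ s); [apply plus_spec| auto]. Qed.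
Lemma star_le (s u : S0) : s ⋅ u = s -> sr s ⋅ u = sr s.
Proof. intros H; symmetry; apply (LStar_cancel1 _ s); [apply star_spec| auto]. Qed.
Lemma R_plus_cancel (s u v : S0) : u ⋅ s = v ⋅ s -> u ⋅ pl s = v ⋅ pl s.
Proof. intros; eapply RStar_cancel; [apply plus_spec|eauto]. Qed.
Lemma L_star_cancel (s u v : S0) : s ⋅ u = s ⋅ v -> sr s ⋅ u = sr s ⋅ v.
Proof. intros; eapply LStar_cancel; [apply star_spec|eauto]. Qed.
End Adeq.

Section Trans.
Variables (S0 S : semigroup) (j : S0 -> S) (bar : S -> S0) (e f : S -> S).
Hypotheses (Hhom : hom j) (Hinj : injective j) (HA : adequate S0)
  (Hstar : star_subsemigroup S0 S j)
  (Huniq : forall x : S, exists! s : S0, exists e f : S, factors_through S0 S j x s e f)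
  (Hfac : factorisation j bar e f).

Lemma j_lmul1 u s : j (lmul1 S0 u s) = lmul1 S (option_map j u) (j s).
Proof. destruct u; simpl; auto. Qed.
Lemma j_rmul1 u s : j (rmul1 S0 s u) = rmul1 S (j s) (option_map j u).
Proof. destruct u; simpl; auto. Qed.
Lemma RStar_transfer s p : RStar (j s) (j p) -> RStar s p.
Proof.
  intros H u v. specialize (H (option_map j u) (option_map j v)).
  rewrite <- !j_lmul1 in H. split; intro E.
  - apply Hinj, H; rewrite E; reflexivity.
  - apply Hinj, H; rewrite E; reflexivity.
Qed.
Lemma LStar_transfer s p : LStar (j s) (j p) -> LStar s p.
Proof.
  intros H u v. specialize (H (option_map j u) (option_map j v)).
  rewrite <- !j_rmul1 in H. split; intro E.
  - apply Hinj, H; rewrite E; reflexivity.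
  - apply Hinj, H; rewrite E; reflexivity.
Qed.
Lemma j_idem p : idem p -> idem (j p).
Proof. unfold idem; intros H; rewrite <- Hhom, H; auto. Qed.
Lemma jR s : RStar (j s) (j (pl s)).
Proof.
  destruct (proj1 (Hstar s)) as [p [Hp H]].
  rewrite (plus_unique _ HA s p); auto. apply RStar_transfer; auto.
Qed.
Lemma jL s : LStar (j s) (j (sr s)).
Proof.
  destruct (proj2 (Hstar s)) as [p [Hp H]].
  rewrite (star_unique _ HA s p); auto. apply LStar_transfer; auto.
Qed.

Lemma fac_eq x : x = e x ⋅ j (bar x) ⋅ f x.
Proof. apply (Hfac x). Qed.
Lemma fac_e x : idem (e x) /\ e x ⋅ j (pl (bar x)) = e x /\ j (pl (bar x)) ⋅ e x = j (pl (bar x)).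
Proof.
  destruct (Hfac x) as (He & Hf & Hx & [p [[Hp HR] HG]] & _).
  rewrite (plus_unique _ HA _ p); auto. split; auto. apply GL_elim; auto using j_idem.
Qed.
Lemma fac_f x : idem (f x) /\ j (sr (bar x)) ⋅ f x = f x /\ f x ⋅ j (sr (bar x)) = j (sr (bar x)).
Proof.
  destruct (Hfac x) as (He & Hf & Hx & _ & [p [[Hp HR] HG]]).
  rewrite (star_unique _ HA _ p); auto. split; auto. apply GR_elim; auto using j_idem.
Qed.

Lemma bar_unique x u e' f' : factors_through S0 S j x u e' f' -> bar x = u.
Proof.
  intros F. destruct (Huniq x) as [s [Hs Hu]].
  rewrite <- (Hu (bar x)), <- (Hu u); eauto.
Qed.

Lemma fact_intro x u e' f' :
  idem e' -> idem f' -> e' ⋅ j (pl u) = e' -> j (pl u) ⋅ e' = j (pl u) ->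
  j (sr u) ⋅ f' = f' -> f' ⋅ j (sr u) = j (sr u) -> x = e' ⋅ j u ⋅ f' ->
  bar x = u /\ e x = e' /\ f x = f'.
Proof.
  intros He Hf E1 E2 F1 F2 Hx.
  assert (Hb : bar x = u).
  { apply (bar_unique x u e' f'). repeat split; auto.
    - exists (pl u); split; [apply plus_spec; auto| apply GL_intro; auto].
    - exists (sr u); split; [apply star_spec; auto| apply GR_intro; auto]. }
  destruct (fac_e x) as (He2 & E3 & E4). destruct (fac_f x) as (Hf2 & F3 & F4).
  rewrite Hb in *. split; auto.
  assert (X1 : x ⋅ j (sr u) = e' ⋅ j u).
  { rewrite Hx. rw F2. rw (eq_sym (Hhom u (sr u))). rewrite star_r; auto. }
  assert (X2 : x ⋅ j (sr u) = e x ⋅ j u).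
  { transitivity ((e x ⋅ j (bar x) ⋅ f x) ⋅ j (sr u)); [f_equal; apply fac_eq|]. rewrite Hb. rw F4. rw (eq_sym (Hhom u (sr u))). rewrite star_r; auto. }
  assert (X3 : j (pl u) ⋅ x = j u ⋅ f').
  { rewrite Hx. an. rewrite E2. rewrite <- Hhom, plus_l; auto. }
  assert (X4 : j (pl u) ⋅ x = j u ⋅ f x).
  { transitivity (j (pl u) ⋅ (e x ⋅ j (bar x) ⋅ f x)); [f_equal; apply fac_eq|]. rewrite Hb. an. rewrite E4. rewrite <- Hhom, plus_l; auto. }
  split.
  - rewrite <- E3, <- E1. apply (RStar_cancel _ (j u)); [apply jR|]. congruence.
  - rewrite <- F3, <- F1. apply (LStar_cancel _ (j u)); [apply jL|]. congruence.
Qed.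

Lemma jpl_idem s : idem (j (pl s)). Proof. apply j_idem, plus_idem; auto. Qed.
Lemma jsr_idem s : idem (j (sr s)). Proof. apply j_idem, star_idem; auto. Qed.
Lemma jplj s : j (pl s) ⋅ j s = j s. Proof. rewrite <- Hhom, plus_l; auto. Qed.
Lemma jjsr s : j s ⋅ j (sr s) = j s. Proof. rewrite <- Hhom, star_r; auto. Qed.

Lemma bar_mid u p q e' f' :
  idem p -> idem q -> idem e' -> idem f' ->
  e' ⋅ j p = e' -> j p ⋅ e' = j p -> j q ⋅ f' = f' -> f' ⋅ j q = j q ->
  p ⋅ u = u -> u ⋅ q = u ->
  bar (e' ⋅ j u ⋅ f') = u /\ e (e' ⋅ j u ⋅ f') = e' ⋅ j (pl u) /\
  f (e' ⋅ j u ⋅ f') = j (sr u) ⋅ f'.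
Proof.
  intros Hp Hq He Hf E1 E2 F1 F2 Pu Uq.
  assert (P1 : p ⋅ pl u = pl u) by (apply plus_le; auto).
  assert (P2 : pl u ⋅ p = pl u) by (rewrite <- (comm _ HA); auto using plus_idem).
  assert (Q1 : sr u ⋅ q = sr u) by (apply star_le; auto).
  assert (Q2 : q ⋅ sr u = sr u) by (rewrite (comm _ HA); auto using star_idem).
  assert (J1 : j (pl u) ⋅ e' = j (pl u)).
  { rewrite <- P2, Hhom. an. rw E2. rewrite <- Hhom; auto. }
  assert (J2 : f' ⋅ j (sr u) = j (sr u)).
  { rewrite <- Q2, Hhom. an. rewrite F2. rewrite <- Hhom; auto. }
  pose proof (jpl_idem u) as I1. pose proof (jsr_idem u) as I2. unfold idem in I1, I2.
  apply fact_intro.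
  - unfold idem. rw J1. rw I1. reflexivity.
  - unfold idem. rw J2. rw I2. reflexivity.
  - rw I1. reflexivity.
  - rw J1. apply I1.
  - rw I2. reflexivity.
  - rw J2. apply I2.
  - rw (jplj u). rw (jjsr u). reflexivity.
Qed.

Lemma j_fac s : bar (j s) = s /\ e (j s) = j (pl s) /\ f (j s) = j (sr s).
Proof.
  pose proof (jpl_idem s) as I1. pose proof (jsr_idem s) as I2. unfold idem in I1, I2.
  destruct (bar_mid s (pl s) (sr s) (j (pl s)) (j (sr s))) as (A1 & A2 & A3);
   auto using plus_idem, star_idem, jpl_idem, jsr_idem, plus_l, star_r.
  assert (E : j (pl s) ⋅ j s ⋅ j (sr s) = j s) by (rewrite jplj, jjsr; auto).
  rewrite E in A1, A2, A3. rewrite I1 in A2. rewrite I2 in A3. auto.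
Qed.

Lemma bar_left u p e' :
  idem p -> idem e' -> e' ⋅ j p = e' -> j p ⋅ e' = j p -> p ⋅ u = u ->
  bar (e' ⋅ j u) = u /\ e (e' ⋅ j u) = e' ⋅ j (pl u) /\ f (e' ⋅ j u) = j (sr u).
Proof.
  intros. pose proof (jsr_idem u) as I2. unfold idem in I2.
  destruct (bar_mid u p (sr u) e' (j (sr u))) as (A1 & A2 & A3);
   auto using star_idem, jsr_idem, star_r.
  rewrite <- sassoc, jjsr in *. rewrite I2 in A3. auto.
Qed.

Lemma bar_right u q f' :
  idem q -> idem f' -> j q ⋅ f' = f' -> f' ⋅ j q = j q -> u ⋅ q = u ->
  bar (j u ⋅ f') = u /\ e (j u ⋅ f') = j (pl u) /\ f (j u ⋅ f') = j (sr u) ⋅ f'.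
Proof.
  intros. pose proof (jpl_idem u) as I1. unfold idem in I1.
  destruct (bar_mid u (pl u) q (j (pl u)) f') as (A1 & A2 & A3);
   auto using plus_idem, jpl_idem, plus_l.
  rewrite jplj in *. rewrite I1 in A2. auto.
Qed.
End Trans.

Section Part1.
Variables (S0 L R : semigroup) (iL : S0 -> L) (iR : S0 -> R)
  (barL : L -> S0) (eL fL : L -> L) (barR : R -> S0) (eR fR : R -> R)
  (st : R -> L -> S0).
Hypotheses (HA : adequate S0) (HLad : left_adequate L) (HRad : right_adequate R)
  (Lhom : hom iL) (Linj : injective iL) (Lstar : star_subsemigroup S0 L iL)
  (Luniq : forall x : L, exists! s : S0, exists e f : L, factors_through S0 L iL x s e f)
  (HQL : quasi_ideal iL)
  (Rhom : hom iR) (Rinj : injective iR) (Rstar : star_subsemigroup S0 R iR)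
  (Runiq : forall x : R, exists! s : S0, exists e f : R, factors_through S0 R iR x s e f)
  (HQR : quasi_ideal iR)
  (HfL : factorisation iL barL eL fL) (HfR : factorisation iR barR eR fR)
  (S1 : forall (y z : L) (a b : R), barL y = barR b ->
     st (iR (st a y) ⋅ fR b) z = st a (eL y ⋅ iL (st b z)))
  (S2a : forall (s : S0) (x : L), iL (st (iR s) x) = iL s ⋅ x)
  (S2b : forall (a : R) (t : S0), iR (st a (iL t)) = a ⋅ iR t).

Let plI := plus_idem S0 HA. Let srI := star_idem S0 HA.
Let LjR := jR S0 L iL Lhom Linj HA Lstar.
Let LjL := jL S0 L iL Lhom Linj HA Lstar.
Let RjR := jR S0 R iR Rhom Rinj HA Rstar.
Let RjL := jL S0 R iR Rhom Rinj HA Rstar.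
Let Lfe := fac_e S0 L iL barL eL fL Lhom HA HfL.
Let Lff := fac_f S0 L iL barL eL fL Lhom HA HfL.
Let Lfeq := fac_eq S0 L iL barL eL fL HfL.
Let Rfe := fac_e S0 R iR barR eR fR Rhom HA HfR.
Let Rff := fac_f S0 R iR barR eR fR Rhom HA HfR.
Let Rfeq := fac_eq S0 R iR barR eR fR HfR.
Let Ljfac := j_fac S0 L iL barL eL fL Lhom Linj HA Lstar Luniq HfL.
Let Rjfac := j_fac S0 R iR barR eR fR Rhom Rinj HA Rstar Runiq HfR.
Let Lleft := bar_left S0 L iL barL eL fL Lhom Linj HA Lstar Luniq HfL.
Let Rright := bar_right S0 R iR barR eR fR Rhom Rinj HA Rstar Runiq HfR.

Lemma fL_eq x : fL x = iL (sr (barL x)).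
Proof.
  destruct (Lff x) as (I & E1 & E2).
  apply (proj2 HLad (fL x)); auto using RStar_refl, j_idem.
  apply R_RStar; auto.
Qed.
Lemma L_dec x : x = eL x ⋅ iL (barL x).
Proof.
  rewrite (Lfeq x) at 1. rewrite fL_eq, <- sassoc, <- Lhom, star_r; auto.
Qed.
Lemma eR_eq a : eR a = iR (pl (barR a)).
Proof.
  destruct (Rfe a) as (I & E1 & E2).
  apply (proj2 HRad (eR a)); auto using LStar_refl, j_idem.
  apply L_LStar; auto.
Qed.
Lemma R_dec a : a = iR (barR a) ⋅ fR a.
Proof.
  rewrite (Rfeq a) at 1. rewrite eR_eq, <- Rhom, plus_l; auto.
Qed.

Lemma st00 s t : st (iR s) (iL t) = s ⋅ t.
Proof. apply Linj. rewrite S2a, Lhom; auto. Qed.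

Lemma fR_fac a : barR (fR a) = sr (barR a) /\ fR (fR a) = fR a.
Proof.
  destruct (Rff a) as (I & E1 & E2).
  destruct (Rright (sr (barR a)) (sr (barR a)) (fR a)) as (A1 & A2 & A3); auto.
  all: try apply srI.
  rewrite E1 in A1, A2, A3. rewrite A3, (star_self _ HA _ (srI _)), E1; auto.
Qed.

Lemma K1 a z : st a z = barR a ⋅ st (fR a) z.
Proof.
  set (q := sr (barR a)).
  assert (Hq : idem q) by apply srI.
  destruct (Ljfac q) as (B1 & B2 & B3).
  destruct (fR_fac a) as (F1 & F2).
  pose proof (S1 (iL q) z (iR (barR a)) (fR a)) as H.
  rewrite B1, F1, F2, B2, (plus_self _ HA q Hq), st00 in H. fold q in H.
  unfold q in H at 1. rewrite star_r, <- R_dec in H; auto.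
  rewrite H, <- Lhom, st00, sassoc. unfold q; rewrite star_r; auto.
all: reflexivity.
Qed.
Lemma K1' a z : pl (barR a) ⋅ st a z = st a z.
Proof. rewrite K1, sassoc, plus_l; auto. Qed.

Lemma K2 a y : st a y = st a y ⋅ sr (barL y).
Proof.
  set (t := barL y).
  destruct (Rjfac t) as (B1 & B2 & B3).
  pose proof (S1 y (iL (sr t)) a (iR t)) as H.
  rewrite B1, B3, <- Rhom, st00, st00, <- sassoc, (star_idem _ HA t), star_r in H; auto.
  rewrite H. f_equal. unfold t. apply L_dec.
all: reflexivity.
Qed.

Lemma C1 x s : pl (barL x) ⋅ s = s ->
  barL (eL x ⋅ iL s) = s /\ eL (eL x ⋅ iL s) = eL x ⋅ iL (pl s).
Proof.
  intros H. destruct (Lfe x) as (I & E1 & E2).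
  destruct (Lleft s (pl (barL x)) (eL x)) as (A1 & A2 & A3); auto.
Qed.
Lemma C2 b s : s ⋅ sr (barR b) = s ->
  barR (iR s ⋅ fR b) = s /\ fR (iR s ⋅ fR b) = iR (sr s) ⋅ fR b.
Proof.
  intros H. destruct (Rff b) as (I & E1 & E2).
  destruct (Rright s (sr (barR b)) (fR b)) as (A1 & A2 & A3); auto.
Qed.

Lemma tmul_closed p q : inT S0 L R barL barR p -> inT S0 L R barL barR q ->
  inT S0 L R barL barR (tmul S0 L R iL iR eL fR st p q).
Proof.
  destruct p as [x a], q as [y b]; unfold inT, tmul; simpl. intros Hp Hq.
  destruct (C1 x (st a y)) as [A1 _]. { rewrite Hp; apply K1'. }
  destruct (C2 b (st a y)) as [A2 _]. { rewrite <- Hq; symmetry; apply K2. }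
  congruence.
Qed.

Lemma tassoc P Q W : inT S0 L R barL barR P -> inT S0 L R barL barR Q -> inT S0 L R barL barR W ->
  tmul S0 L R iL iR eL fR st P (tmul S0 L R iL iR eL fR st Q W) =
  tmul S0 L R iL iR eL fR st (tmul S0 L R iL iR eL fR st P Q) W.
Proof.
  destruct P as [x a], Q as [y b], W as [z c]; unfold inT, tmul; simpl. intros Hp Hq Hw.
  destruct (C1 x (st a y)) as [A1 A2]. { rewrite Hp; apply K1'. }
  destruct (C2 b (st a y)) as [A3 A4]. { rewrite <- Hq; symmetry; apply K2. }
  destruct (C1 y (st b z)) as [B1 B2]. { rewrite Hq; apply K1'. }
  destruct (C2 c (st b z)) as [B3 B4]. { rewrite <- Hw; symmetry; apply K2. }
  rewrite A2, B4.
  assert (W1 : pl (st a y) ⋅ st (iR (st a y) ⋅ fR b) z = st (iR (st a y) ⋅ fR b) z).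
  { rewrite <- A3 at 1. apply K1'. }
  assert (W2 : st a (eL y ⋅ iL (st b z)) ⋅ sr (st b z) = st a (eL y ⋅ iL (st b z))).
  { rewrite <- B1 at 2. symmetry; apply K2. }
  rewrite <- sassoc, <- Lhom, W1, S1; auto.
  rewrite sassoc, <- Rhom, W2. reflexivity.
Qed.

Definition TT := {p : L * R | inT S0 L R barL barR p}.
Definition Tm (u v : TT) : TT :=
  exist _ (tmul S0 L R iL iR eL fR st (proj1_sig u) (proj1_sig v))
    (tmul_closed _ _ (proj2_sig u) (proj2_sig v)).
Lemma sig_eq {A} {P : A -> Prop} (u v : {x : A | P x}) : proj1_sig u = proj1_sig v -> u = v.
Proof. destruct u, v; simpl; intros ->; f_equal; apply proof_irrelevance. Qed.
Lemma Tm_assoc (x y z : TT) : Tm x (Tm y z) = Tm (Tm x y) z.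
Proof. apply sig_eq; simpl. apply tassoc; apply proj2_sig. Qed.
Definition Tsg : semigroup := Semigroup TT Tm Tm_assoc.

Lemma eL_fac x : barL (eL x) = pl (barL x) /\ eL (eL x) = eL x.
Proof.
  destruct (Lfe x) as (I & E1 & E2).
  destruct (Lleft (pl (barL x)) (pl (barL x)) (eL x)) as (A1 & A2 & _); auto.
  { apply plI. }
  rewrite E1, (plus_self _ HA _ (plI _)), E1 in *. auto.
Qed.

Definition E_of (t : Tsg) : Tsg.
Proof.
  refine (exist _ (eL (fst (proj1_sig t)), iR (pl (barL (fst (proj1_sig t))))) _).
  unfold inT; simpl. rewrite (proj1 (eL_fac _)), (proj1 (Rjfac _)). reflexivity.
Defined.
Definition F_of (t : Tsg) : Tsg.
Proof.
  refine (exist _ (iL (sr (barL (fst (proj1_sig t)))), fR (snd (proj1_sig t))) _).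
  unfold inT; simpl. rewrite (proj1 (fR_fac _)), (proj1 (Ljfac _)).
  destruct t as [[x a] Ht]; unfold inT in Ht; simpl in *. congruence.
Defined.

Lemma Rform (t : Tsg) (u : option Tsg) : exists g w,
  w ⋅ pl (barL (fst (proj1_sig t))) = w /\
  proj1_sig (lmul1 Tsg u t) = (g ⋅ iL (w ⋅ barL (fst (proj1_sig t))),
                               iR (w ⋅ barL (fst (proj1_sig t))) ⋅ fR (snd (proj1_sig t))) /\
  proj1_sig (lmul1 Tsg u (E_of t)) = (g ⋅ iL w, iR w).
Proof.
  destruct t as [[x a] Ht]; unfold inT in Ht; simpl in *.
  destruct (Lfe x) as (I & E1 & E2).
  destruct (eL_fac x) as (G1 & G2).
  set (s := barL x) in *.
  destruct u as [[[y b] Hu]|]; simpl; unfold tmul; simpl.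
  - exists (eL y), (st b (eL x)).
    assert (W : st b (eL x) ⋅ pl s = st b (eL x)).
    { rewrite (K2 b (eL x)) at 2. rewrite G1, (star_self _ HA _ (plI _)). reflexivity. }
    assert (X : st b x = st b (eL x) ⋅ s).
    { pose proof (S1 (eL x) (iL s) b (iR (pl s))) as H.
      rewrite G1, (proj1 (Rjfac _)), (proj2 (proj2 (Rjfac _))), G2,
        (star_self _ HA _ (plI _)), <- Rhom, !st00, plus_l, W in H; auto.
      rewrite H by reflexivity. f_equal. unfold s; apply L_dec. }
    split; auto. unfold tmul; simpl. rewrite X. split; auto.
    fold s. rewrite (proj2 (proj2 (Rjfac _))), (star_self _ HA _ (plI _)), <- Rhom, W. reflexivity.
  - exists (eL x), (pl s). split; [apply plI|].
    rewrite plus_l, E1; auto. split; auto. f_equal.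
    + apply L_dec.
    + rewrite Ht. apply R_dec.
Qed.

Lemma T_RStar (t : Tsg) : RStar t (E_of t).
Proof.
  intros u v.
  destruct (Rform t u) as (g & w & W & U1 & U2).
  destruct (Rform t v) as (g' & w' & W' & V1 & V2).
  destruct t as [[x a] Ht]; unfold inT in Ht; simpl in *.
  set (s := barL x) in *.
  split; intro H; apply sig_eq; apply (f_equal (@proj1_sig _ _)) in H;
    rewrite ?U1, ?U2, ?V1, ?V2 in *; injection H as H1 H2.
  - assert (Ew : w = w').
    { destruct (Rff a) as (_ & _ & F2). rewrite <- Ht in F2. fold s in F2.
      assert (H3 : iR (w ⋅ s) ⋅ fR a ⋅ iR (sr s) = iR (w' ⋅ s) ⋅ fR a ⋅ iR (sr s)) by (rewrite H2; auto).
      rewrite <- !sassoc, F2, <- !Rhom, <- !sassoc, !star_r in H3; auto.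
      apply Rinj in H3. apply (R_plus_cancel _ HA) in H3. congruence. }
    subst w'. f_equal.
    rewrite !Lhom, !sassoc in H1. apply (RStar_cancel _ _ _ _ _ (LjR s)) in H1.
    rewrite <- !sassoc, <- !Lhom, W in H1. exact H1.
  - apply Rinj in H2. subst w'. f_equal.
    rewrite !Lhom, !sassoc, H1. reflexivity.
Qed.

Lemma Lform (t : Tsg) (u : option Tsg) : exists h w,
  sr (barL (fst (proj1_sig t))) ⋅ w = w /\
  proj1_sig (rmul1 Tsg t u) = (eL (fst (proj1_sig t)) ⋅ iL (barL (fst (proj1_sig t)) ⋅ w),
                               iR (barL (fst (proj1_sig t)) ⋅ w) ⋅ h) /\
  proj1_sig (rmul1 Tsg (F_of t) u) = (iL w, iR w ⋅ h).
Proof.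
  destruct t as [[x a] Ht]; unfold inT in Ht; simpl in *.
  destruct (Rff a) as (I & F1 & F2). rewrite <- Ht in F1, F2.
  destruct (fR_fac a) as (G1 & G2). rewrite <- Ht in G1.
  set (s := barL x) in *.
  destruct u as [[[y b] Hu]|]; simpl; unfold tmul; simpl.
  - exists (fR b), (st (fR a) y). fold s.
    assert (Wf : sr s ⋅ st (fR a) y = st (fR a) y).
    { pose proof (K1' (fR a) y) as K. rewrite G1, (plus_self _ HA _ (srI _)) in K. exact K. }
    split; auto.
    rewrite (K1 a y), <- Ht. split; auto.
    rewrite (proj1 (proj2 (Ljfac _))), (plus_self _ HA _ (srI _)), <- Lhom, Wf. reflexivity.
  - exists (fR a), (sr s). split; [apply srI|].
    rewrite star_r, F1; auto. split; auto. f_equal.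
    + apply L_dec.
    + rewrite Ht. apply R_dec.
Qed.

Lemma T_LStar (t : Tsg) : LStar t (F_of t).
Proof.
  intros u v.
  destruct (Lform t u) as (h & w & W & U1 & U2).
  destruct (Lform t v) as (h' & w' & W' & V1 & V2).
  destruct t as [[x a] Ht]; unfold inT in Ht; simpl in *.
  destruct (Lfe x) as (I & E1 & E2).
  set (s := barL x) in *.
  split; intro H; apply sig_eq; apply (f_equal (@proj1_sig _ _)) in H;
    rewrite ?U1, ?U2, ?V1, ?V2 in *; injection H as H1 H2.
  - assert (Ew : w = w').
    { assert (H3 : iL (pl s) ⋅ eL x ⋅ iL (s ⋅ w) = iL (pl s) ⋅ eL x ⋅ iL (s ⋅ w')) by
        (rewrite <- !sassoc, H1; auto).
      rewrite E2, <- !Lhom, !sassoc, !plus_l in H3; auto.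
      apply Linj in H3. apply (L_star_cancel _ HA) in H3. congruence. }
    subst w'. f_equal.
    rewrite !Rhom, <- !sassoc in H2. apply (LStar_cancel _ _ _ _ _ (RjL s)) in H2.
    rewrite !sassoc, <- !Rhom, W in H2. exact H2.
  - apply Linj in H1. subst w'. f_equal.
    rewrite !Rhom, <- !sassoc, H2. reflexivity.
Qed.

Lemma stE x : st (iR (pl (barL x))) (eL x) = pl (barL x).
Proof. apply Linj. rewrite S2a. apply (Lfe x). Qed.
Lemma stF a : st (fR a) (iL (sr (barR a))) = sr (barR a).
Proof. apply Rinj. rewrite S2b. apply (Rff a). Qed.

Lemma iL_idem p : idem p -> iL p ⋅ iL p = iL p.
Proof. intros H; rewrite <- Lhom, H; auto. Qed.
Lemma iR_idem p : idem p -> iR p ⋅ iR p = iR p.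
Proof. intros H; rewrite <- Rhom, H; auto. Qed.

Lemma E_idem t : idem (E_of t).
Proof.
  apply sig_eq. destruct t as [[x a] Ht]; simpl; unfold tmul; simpl.
  rewrite stE, (proj2 (eL_fac x)), (proj2 (proj2 (Rjfac _))), (star_self _ HA _ (plI _)),
    iR_idem by apply plI. rewrite (proj1 (proj2 (Lfe x))). reflexivity.
Qed.
Lemma F_idem t : idem (F_of t).
Proof.
  apply sig_eq. destruct t as [[x a] Ht]; unfold inT in Ht; simpl in *; unfold tmul; simpl.
  rewrite Ht, stF, (proj1 (proj2 (Ljfac _))), (plus_self _ HA _ (srI _)), (proj2 (fR_fac a)),
    iL_idem by apply srI. rewrite (proj1 (proj2 (Rff a))). reflexivity.
Qed.

Lemma T_abundant : abundant Tsg.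
Proof.
  intros t; split.
  - exists (E_of t); split; [apply E_idem| apply T_RStar].
  - exists (F_of t); split; [apply F_idem| apply T_LStar].
Qed.

Definition jT (s : S0) : Tsg.
Proof.
  refine (exist _ (iL s, iR s) _). unfold inT; simpl.
  rewrite (proj1 (Ljfac s)), (proj1 (Rjfac s)). reflexivity.
Defined.

Lemma jT_hom : hom jT.
Proof.
  intros s t. apply sig_eq; simpl; unfold tmul; simpl.
  rewrite st00, (proj1 (proj2 (Ljfac s))), (proj2 (proj2 (Rjfac t))), <- Lhom, <- Rhom,
    sassoc, plus_l, <- sassoc, star_r; auto.
Qed.
Lemma jT_inj : injective jT.
Proof.
  intros s t H. apply (f_equal (fun u => fst (proj1_sig u))) in H. simpl in H. auto.
Qed.

Lemma E_jT s : E_of (jT s) = jT (pl s).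
Proof.
  apply sig_eq; simpl. rewrite (proj1 (Ljfac s)), (proj1 (proj2 (Ljfac s))). reflexivity.
Qed.
Lemma F_jT s : F_of (jT s) = jT (sr s).
Proof.
  apply sig_eq; simpl. rewrite (proj1 (Ljfac s)), (proj2 (proj2 (Rjfac s))). reflexivity.
Qed.

Lemma jT_star : star_subsemigroup S0 Tsg jT.
Proof.
  intros s; split.
  - exists (pl s); split; [apply plI|]. rewrite <- E_jT. apply T_RStar.
  - exists (sr s); split; [apply srI|]. rewrite <- F_jT. apply T_LStar.
Qed.

Lemma bar_tmul P Q : inT S0 L R barL barR P -> inT S0 L R barL barR Q ->
  barL (fst (tmul S0 L R iL iR eL fR st P Q)) = st (snd P) (fst Q).
Proof.
  destruct P as [x a], Q as [y b]; unfold inT, tmul; simpl. intros Hp Hq.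
  destruct (C1 x (st a y)) as [A1 _]. { rewrite Hp; apply K1'. }
  exact A1.
Qed.

Lemma T_fact_exists (t : Tsg) :
  factors_through S0 Tsg jT t (barL (fst (proj1_sig t))) (E_of t) (F_of t).
Proof.
  repeat split.
  - apply E_idem.
  - apply F_idem.
  - apply sig_eq. destruct t as [[x a] Ht]; unfold inT in Ht; simpl in *.
    assert (X1 : tmul S0 L R iL iR eL fR st (eL x, iR (pl (barL x))) (iL (barL x), iR (barL x))
                 = (x, iR (barL x))).
    { unfold tmul; simpl.
      rewrite (proj2 (eL_fac x)), st00, plus_l, (proj2 (proj2 (Rjfac _))), <- Rhom, star_r,
        <- L_dec; auto. }
    assert (X2 : tmul S0 L R iL iR eL fR st (x, iR (barL x)) (iL (sr (barL x)), fR a) = (x, a)).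
    { unfold tmul; simpl.
      rewrite st00, star_r, (proj2 (fR_fac a)), <- L_dec, Ht, <- R_dec; auto. }
    rewrite X1, X2. reflexivity.
  - exists (pl (barL (fst (proj1_sig t)))). split; [apply plus_spec; auto|].
    apply GL_intro.
    + apply sig_eq. destruct t as [[x a] Ht]; simpl; unfold tmul; simpl.
      rewrite (proj2 (eL_fac x)), st00, (proj2 (proj2 (Rjfac _))), (plI _),
        (star_self _ HA _ (plI _)), iR_idem by apply plI.
      rewrite (proj1 (proj2 (Lfe x))). reflexivity.
    + apply sig_eq. destruct t as [[x a] Ht]; simpl; unfold tmul; simpl.
      rewrite stE, (proj1 (proj2 (Ljfac _))), (plus_self _ HA _ (plI _)),
        (proj2 (proj2 (Rjfac _))), (star_self _ HA _ (plI _)), iL_idem, iR_idem by apply plI.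
      reflexivity.
  - exists (sr (barL (fst (proj1_sig t)))). split; [apply star_spec; auto|].
    apply GR_intro.
    + apply sig_eq. destruct t as [[x a] Ht]; unfold inT in Ht; simpl in *; unfold tmul; simpl.
      rewrite st00, (proj1 (proj2 (Ljfac _))), (plus_self _ HA _ (srI _)), (srI _),
        (proj2 (fR_fac a)), iL_idem by apply srI.
      rewrite Ht. rewrite (proj1 (proj2 (Rff a))). reflexivity.
    + apply sig_eq. destruct t as [[x a] Ht]; unfold inT in Ht; simpl in *; unfold tmul; simpl.
      rewrite Ht, stF, (proj1 (proj2 (Ljfac _))), (plus_self _ HA _ (srI _)),
        (proj2 (proj2 (Rjfac _))), (star_self _ HA _ (srI _)), iL_idem, iR_idem by apply srI.
      reflexivity.
Qed.

Lemma T_fact_unique (t : Tsg) s' E' F' :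
  factors_through S0 Tsg jT t s' E' F' -> s' = barL (fst (proj1_sig t)).
Proof.
  intros (IE & IF & Ht & [p [[Hp HRp] GLp]] & [q [[Hq HLq] GRq]]).
  assert (Ep : pl s' = p) by (apply plus_unique; auto).
  assert (Eq : sr s' = q) by (apply star_unique; auto).
  pose proof (j_idem S0 Tsg jT jT_hom) as Ij.
  destruct (GL_elim _ _ _ IE (Ij _ Hp) GLp) as [EL1 EL2].
  destruct (GR_elim _ _ _ IF (Ij _ Hq) GRq) as [FR1 FR2].
  unfold idem in IE, IF.
  destruct E' as [[y b] HE]; destruct F' as [[z c] HF]; unfold inT in HE, HF; simpl in HE, HF.
  apply (f_equal (@proj1_sig _ _)) in EL1, EL2, FR1, FR2, IE, IF.
  simpl in EL1, EL2, FR1, FR2, IE, IF. unfold tmul in EL1, EL2, FR1, FR2, IE, IF.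
  simpl in EL1, EL2, FR1, FR2, IE, IF.
  injection EL1 as EL1a EL1b. injection EL2 as EL2a EL2b.
  injection FR1 as FR1a FR1b. injection FR2 as FR2a FR2b.
  injection IE as IEa IEb. injection IF as IFa IFb.
  assert (Er : b = iR p).
  { rewrite (proj2 (proj2 (Rjfac p))), (star_self _ HA _ Hp), S2b in EL1b.
    assert (B1 : b ⋅ iR p = b) by (rewrite <- sassoc, iR_idem in EL1b; auto).
    set (r := barR b) in *.
    assert (Hb : b = iR r).
    { unfold r. rewrite <- B1 at 2. rewrite <- S2b, (proj1 (Rjfac _)). rewrite S2b, B1; auto. }
    assert (Hrp : r ⋅ p = r) by (apply Rinj; rewrite Rhom, <- Hb; auto).
    assert (HE' : barL y = r) by exact HE.
    set (e := eL y) in *.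
    destruct (Lfe y) as (Ie & Ee1 & Ee2). fold e in Ie, Ee1, Ee2. rewrite HE' in Ee1, Ee2.
    assert (Hy : y = e ⋅ iL r) by (unfold e; rewrite <- HE'; apply L_dec).
    assert (I1 : iL p ⋅ y = iL p).
    { rewrite (proj1 (proj2 (Ljfac p))), (plus_self _ HA _ Hp), S2a, sassoc, iL_idem in EL2a; auto. }
    assert (I2 : iL r ⋅ e ⋅ iL r = iL r).
    { rewrite Hb, (proj2 (proj2 (Rjfac r))), <- Rhom in IEb. apply Rinj in IEb.
      apply (f_equal iL) in IEb. rewrite Lhom, S2a, Hy, <- !sassoc, <- Lhom, star_r in IEb; auto.
      rewrite !sassoc in IEb. exact IEb. }
    destruct (HQL p (pl r) e) as [g Hg]. rewrite <- sassoc, Ee1 in Hg.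
    assert (Gr : g ⋅ r = p).
    { apply Linj. rewrite Lhom, <- Hg, <- sassoc, <- Hy; auto. }
    assert (RGR : r ⋅ g ⋅ r = r).
    { apply Linj. rewrite !Lhom, <- Hg, sassoc, <- Lhom, Hrp. exact I2. }
    assert (Prg : pl r = r ⋅ g).
    { apply plus_unique; auto.
      - unfold idem. rewrite sassoc, RGR. reflexivity.
      - apply (R_RStar' _ _ _ r g); auto. }
    assert (I3 : iL r ⋅ e = iL (pl r)).
    { rewrite Prg, Lhom, <- Hg, sassoc, <- Lhom, Hrp. reflexivity. }
    assert (Yid : idem y).
    { unfold idem. rewrite Hy. rw I3. rw Ee1. reflexivity. }
    assert (Ye : y = e).
    { apply (proj2 HLad y); auto using RStar_refl.
      apply R_RStar.
      - rewrite Hy. rw I3. exact Ee1.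
      - rewrite Hy, sassoc. unfold idem in Ie. rewrite Ie. reflexivity. }
    assert (Hr : r = pl r).
    { assert (Er1 : e ⋅ iL r = e) by (rewrite <- Hy; auto).
      apply Linj. symmetry. transitivity (iL (pl r) ⋅ e ⋅ iL r).
      - rewrite <- sassoc, Er1, Ee2; auto.
      - rewrite Ee2, <- Lhom, plus_l; auto. }
    assert (Ir : idem r) by (rewrite Hr; apply plI).
    assert (Pr : p ⋅ r = p) by (rewrite <- Gr, <- sassoc, Ir; auto).
    rewrite Hb. f_equal. rewrite <- Hrp, (comm _ HA r p Ir Hp), Pr. reflexivity. }
  assert (Ez : z = iL q).
  { rewrite (proj1 (proj2 (Ljfac q))), (plus_self _ HA _ Hq), S2a, sassoc, iL_idem in FR1a; auto.
    set (w := st (iR q) z) in *.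
    assert (Hz : z = iL w) by (unfold w; rewrite S2a; auto).
    assert (Bz : barL z = w) by (rewrite Hz; apply Ljfac).
    assert (Qw : q ⋅ w = w) by (apply Linj; rewrite Lhom, <- Hz; auto).
    assert (HF' : w = barR c) by congruence.
    set (f := fR c) in *.
    destruct (Rff c) as (If & Ef1 & Ef2). fold f in If, Ef1, Ef2. rewrite <- HF' in Ef1, Ef2.
    assert (Hc : c = iR w ⋅ f) by (unfold f; rewrite HF'; apply R_dec).
    assert (I1 : iR w ⋅ f ⋅ iR q = iR q).
    { rewrite (proj2 (proj2 (Rjfac q))), (star_self _ HA _ Hq), S2b, <- sassoc, iR_idem in FR2b; auto.
      rewrite <- Hc; auto. }
    assert (I2 : iR w ⋅ f ⋅ iR w = iR w).
    { rewrite Hz, (proj1 (proj2 (Ljfac w))), <- Lhom in IFa. apply Linj in IFa.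
      assert (K : st c (iL w) = w).
      { rewrite <- IFa at 2. apply Rinj. rewrite Rhom, S2b, Hc, !sassoc, <- Rhom, plus_l; auto. }
      apply (f_equal iR) in K. rewrite S2b, Hc in K. exact K. }
    destruct (HQR (sr w) q f) as [g Hg]. rewrite Ef1 in Hg.
    assert (Wg : w ⋅ g = q).
    { apply Rinj. rewrite Rhom, <- Hg, sassoc; auto. }
    assert (WGW : w ⋅ g ⋅ w = w).
    { apply Rinj. rewrite !Rhom, <- Hg. rw (eq_sym (Rhom q w)). rewrite Qw. exact I2. }
    assert (Sgw : sr w = g ⋅ w).
    { apply star_unique; auto.
      - unfold idem. rw WGW. reflexivity.
      - apply (L_LStar' _ _ _ w g); auto. rewrite sassoc; auto. }
    assert (I3 : f ⋅ iR w = iR (sr w)).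
    { rewrite Sgw, Rhom, <- Hg, <- sassoc, <- Rhom, Qw. reflexivity. }
    assert (Yid : idem (iR w ⋅ f)).
    { unfold idem. rw I3. rw (eq_sym (Rhom w (sr w))). rewrite star_r; auto. }
    assert (Ye : iR w ⋅ f = f).
    { apply (proj2 HRad (iR w ⋅ f)); auto using LStar_refl.
      apply L_LStar.
      - rewrite <- sassoc, If. reflexivity.
      - an. rewrite I3. exact Ef1. }
    assert (Hw : w = sr w).
    { apply Rinj. rewrite <- Ef2. rewrite <- Ye at 1. rewrite <- sassoc, Ef2, <- Rhom, star_r; auto. }
    assert (Iw : idem w) by (rewrite Hw; apply srI).
    assert (Wq : w ⋅ q = q) by (rewrite <- Wg, sassoc, Iw; auto).
    rewrite Hz. f_equal. rewrite <- Qw, (comm _ HA q w Hq Iw), Wq. reflexivity. }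
  transitivity (barL (fst (tmul S0 L R iL iR eL fR st
     (tmul S0 L R iL iR eL fR st (y,b) (iL s', iR s')) (z,c)))).
  2: { rewrite Ht; reflexivity. }
  rewrite bar_tmul; [| apply tmul_closed; [exact HE| apply (proj2_sig (jT s'))] | exact HF].
  unfold tmul; simpl.
  rewrite Er, st00, (proj2 (proj2 (Rjfac s'))), <- Rhom, <- Ep, plus_l, star_r; auto.
  rewrite Ez, st00, <- Eq, star_r; auto.
Qed.

Lemma jT_qi : quasi_ideal jT.
Proof.
  intros s u [[x a] Ht]. unfold inT in Ht; simpl in Ht.
  set (m := st (iR s) x).
  set (n := st (iR m ⋅ fR a) (iL u)).
  exists n. apply sig_eq. simpl; unfold tmul; simpl. fold m. fold n.
  assert (M1 : pl s ⋅ m = m).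
  { pose proof (K1' (iR s) x) as K. rewrite (proj1 (Rjfac s)) in K. exact K. }
  assert (M2 : m ⋅ sr (barR a) = m) by (rewrite <- Ht; symmetry; apply K2).
  destruct (C2 a m M2) as [B1 _].
  assert (N1 : pl m ⋅ n = n).
  { pose proof (K1' (iR m ⋅ fR a) (iL u)) as K. rewrite B1 in K. exact K. }
  assert (N2 : n ⋅ sr u = n).
  { pose proof (K2 (iR m ⋅ fR a) (iL u)) as K. rewrite (proj1 (Ljfac u)) in K. symmetry; exact K. }
  rewrite (proj1 (proj2 (Ljfac s))), <- Lhom, M1, (proj1 (proj2 (Ljfac m))), <- Lhom, N1,
    (proj2 (proj2 (Rjfac u))), <- Rhom, N2. reflexivity.
Qed.

Lemma part1_main : exists (T : semigroup) (phi : T -> L * R),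
       iso_onto T (inT S0 L R barL barR) (tmul S0 L R iL iR eL fR st) phi /\
       abundant T /\
       exists j : S0 -> T,
         adequate_transversal j /\ quasi_ideal j /\
         forall s : S0, phi (j s) = (iL s, iR s).
Proof.
  exists Tsg, (@proj1_sig _ _). split; [|split].
  - split; [|split; [|split]].
    + intros u v H; apply sig_eq; exact H.
    + intros u; exact (proj2_sig u).
    + intros p Hp; exists (exist _ p Hp); reflexivity.
    + intros u v; reflexivity.
  - apply T_abundant.
  - exists jT. split; [|split].
    + split; [apply jT_hom|split; [apply jT_inj|split; [exact HA|split; [apply jT_star|]]]].
      intros t. exists (barL (fst (proj1_sig t))). split.
      * exists (E_of t), (F_of t). apply T_fact_exists.
      * intros s' [E' [F' H]]. symmetry. eapply T_fact_unique; eauto.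
    + apply jT_qi.
    + intros s; reflexivity.
Qed.
End Part1.

Section Sub.
Variables (S : semigroup) (P : S -> Prop) (Hc : forall x y, P x -> P y -> P (x ⋅ y)).
Definition sub_op (u v : {x | P x}) : {x | P x} :=
  exist _ (proj1_sig u ⋅ proj1_sig v) (Hc _ _ (proj2_sig u) (proj2_sig v)).
Lemma sub_assoc (x y z : {x | P x}) : sub_op x (sub_op y z) = sub_op (sub_op x y) z.
Proof. apply sig_eq; simpl; apply sassoc. Qed.
Definition subsg : semigroup := Semigroup {x | P x} sub_op sub_assoc.

Lemma sub_lmul1 (u : option subsg) (a : subsg) :
  proj1_sig (lmul1 subsg u a) = lmul1 S (option_map (@proj1_sig _ _) u) (proj1_sig a).
Proof. destruct u; reflexivity. Qed.
Lemma sub_rmul1 (u : option subsg) (a : subsg) :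
  proj1_sig (rmul1 subsg a u) = rmul1 S (proj1_sig a) (option_map (@proj1_sig _ _) u).
Proof. destruct u; reflexivity. Qed.
Lemma sub_RStar (a b : subsg) : RStar (proj1_sig a) (proj1_sig b) -> RStar a b.
Proof.
  intros H u v. specialize (H (option_map (@proj1_sig _ _) u) (option_map (@proj1_sig _ _) v)).
  split; intro E.
  - apply sig_eq. rewrite !sub_lmul1. apply H. rewrite <- !sub_lmul1, E; auto.
  - apply sig_eq. rewrite !sub_lmul1. apply H. rewrite <- !sub_lmul1, E; auto.
Qed.
Lemma sub_LStar (a b : subsg) : LStar (proj1_sig a) (proj1_sig b) -> LStar a b.
Proof.
  intros H u v. specialize (H (option_map (@proj1_sig _ _) u) (option_map (@proj1_sig _ _) v)).
  split; intro E.
  - apply sig_eq. rewrite !sub_rmul1. apply H. rewrite <- !sub_rmul1, E; auto.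
  - apply sig_eq. rewrite !sub_rmul1. apply H. rewrite <- !sub_rmul1, E; auto.
Qed.
Lemma sub_RStar' (a b : subsg) : RStar a b -> RStar (proj1_sig a) (proj1_sig b) \/ True.
Proof. auto. Qed.
Lemma sub_idem (a : subsg) : idem a -> idem (proj1_sig a).
Proof. intros H; unfold idem in *. apply (f_equal (@proj1_sig _ _)) in H. exact H. Qed.
Lemma sub_idem' (a : subsg) : idem (proj1_sig a) -> idem a.
Proof. intros H; unfold idem in *. apply sig_eq. exact H. Qed.
Lemma sub_GL (a b : subsg) : GreenL a b -> GreenL (proj1_sig a) (proj1_sig b).
Proof.
  intros [[u Hu] [v Hv]]; split.
  - exists (option_map (@proj1_sig _ _) u). rewrite Hu at 1. apply sub_lmul1.
  - exists (option_map (@proj1_sig _ _) v). rewrite Hv at 1. apply sub_lmul1.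
Qed.
Lemma sub_GR (a b : subsg) : GreenR a b -> GreenR (proj1_sig a) (proj1_sig b).
Proof.
  intros [[u Hu] [v Hv]]; split.
  - exists (option_map (@proj1_sig _ _) u). rewrite Hu at 1. apply sub_rmul1.
  - exists (option_map (@proj1_sig _ _) v). rewrite Hv at 1. apply sub_rmul1.
Qed.
End Sub.

Section Part2.
Variables (S S0 : semigroup) (j : S0 -> S).
Hypotheses (Hhom : hom j) (Hinj : injective j) (HA : adequate S0)
  (Hstar : star_subsemigroup S0 S j)
  (Huniq : forall x : S, exists! s : S0, exists e f : S, factors_through S0 S j x s e f)
  (HQ : quasi_ideal j).

Lemma inh (x : S) : inhabited (S0 * S * S).
Proof. destruct (Huniq x) as [s [[e' [f' _]] _]]. constructor. exact (s, e', f'). Qed.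
Definition trip (x : S) : S0 * S * S :=
  epsilon (inh x) (fun t => factors_through S0 S j x (fst (fst t)) (snd (fst t)) (snd t)).
Definition bar (x : S) : S0 := fst (fst (trip x)).
Definition ee (x : S) : S := snd (fst (trip x)).
Definition ff (x : S) : S := snd (trip x).
Lemma Hfac : factorisation j bar ee ff.
Proof.
  intros x; unfold bar, ee, ff, trip. apply epsilon_spec.
  destruct (Huniq x) as [s [[e' [f' H]] _]]. exists (s, e', f'). exact H.
Qed.

Let plI := plus_idem S0 HA. Let srI := star_idem S0 HA.
Let jR' := jR S0 S j Hhom Hinj HA Hstar.
Let jL' := jL S0 S j Hhom Hinj HA Hstar.
Let fe := fac_e S0 S j bar ee ff Hhom HA Hfac.
Let ff' := fac_f S0 S j bar ee ff Hhom HA Hfac.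
Let feq := fac_eq S0 S j bar ee ff Hfac.
Let jfac := j_fac S0 S j bar ee ff Hhom Hinj HA Hstar Huniq Hfac.
Let bleft := bar_left S0 S j bar ee ff Hhom Hinj HA Hstar Huniq Hfac.
Let bright := bar_right S0 S j bar ee ff Hhom Hinj HA Hstar Huniq Hfac.
Let bmid := bar_mid S0 S j bar ee ff Hhom Hinj HA Hstar Huniq Hfac.
Let fintro := fact_intro S0 S j bar ee ff Hhom Hinj HA Hstar Huniq Hfac.
Let jplj' := jplj S0 S j Hhom HA.
Let jjsr' := jjsr S0 S j Hhom HA.
Let jidem := j_idem S0 S j Hhom.

Lemma jid p : idem p -> j p ⋅ j p = j p.
Proof. intros H. exact (jidem p H). Qed.

Lemma prod_fac x y : exists m,
  j m = j (bar x) ⋅ ff x ⋅ ee y ⋅ j (bar y) /\ x ⋅ y = ee x ⋅ j m ⋅ ff y /\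
  bar (x ⋅ y) = m /\ ee (x ⋅ y) = ee x ⋅ j (pl m) /\ ff (x ⋅ y) = j (sr m) ⋅ ff y /\
  pl (bar x) ⋅ m = m /\ m ⋅ sr (bar y) = m.
Proof.
  destruct (HQ (bar x) (bar y) (ff x ⋅ ee y)) as [m Hm].
  rewrite <- sassoc in Hm.
  assert (Hm' : j (bar x) ⋅ ff x ⋅ ee y ⋅ j (bar y) = j m) by (an; an; rewrite <- Hm; an; reflexivity).
  assert (M1 : pl (bar x) ⋅ m = m).
  { apply Hinj. rewrite Hhom, <- Hm'. rw (jplj' (bar x)). reflexivity. }
  assert (M2 : m ⋅ sr (bar y) = m).
  { apply Hinj. rewrite Hhom, <- Hm'. rw (jjsr' (bar y)). reflexivity. }
  assert (Exy : x ⋅ y = ee x ⋅ j m ⋅ ff y).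
  { transitivity ((ee x ⋅ j (bar x) ⋅ ff x) ⋅ (ee y ⋅ j (bar y) ⋅ ff y)).
    - rewrite <- !feq. reflexivity.
    - rw Hm'. reflexivity. }
  destruct (fe x) as (I1 & E1 & E2). destruct (ff' y) as (I2 & F1 & F2).
  destruct (bmid m (pl (bar x)) (sr (bar y)) (ee x) (ff y)) as (A1 & A2 & A3); auto.
  exists m. rewrite Exy. auto 10.
Qed.

Definition Lset (x : S) : Prop := ff x = j (sr (bar x)).
Definition Rset (x : S) : Prop := ee x = j (pl (bar x)).

Lemma Lclosed x y : Lset x -> Lset y -> Lset (x ⋅ y).
Proof.
  unfold Lset; intros Hx Hy.
  destruct (prod_fac x y) as (m & _ & _ & B & _ & F & _ & M2).
  rewrite F, B, Hy, <- Hhom, (star_le _ HA); auto.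
Qed.
Lemma Rclosed x y : Rset x -> Rset y -> Rset (x ⋅ y).
Proof.
  unfold Rset; intros Hx Hy.
  destruct (prod_fac x y) as (m & _ & _ & B & E & _ & M1 & _).
  rewrite E, B, Hx, <- Hhom, (plus_le _ HA); auto.
Qed.

Definition Ls : semigroup := subsg S Lset Lclosed.
Definition Rs : semigroup := subsg S Rset Rclosed.

Lemma L_dec2 x : Lset x -> x = ee x ⋅ j (bar x).
Proof. unfold Lset; intros H. rewrite (feq x) at 1. rewrite H, <- sassoc, jjsr'. reflexivity. Qed.
Lemma R_dec2 a : Rset a -> a = j (bar a) ⋅ ff a.
Proof. unfold Rset; intros H. rewrite (feq a) at 1. rewrite H, jplj'. reflexivity. Qed.

Lemma j_L s : Lset (j s).
Proof. unfold Lset. rewrite (proj1 (jfac s)), (proj2 (proj2 (jfac s))). reflexivity. Qed.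
Lemma j_R s : Rset (j s).
Proof. unfold Rset. rewrite (proj1 (jfac s)), (proj1 (proj2 (jfac s))). reflexivity. Qed.

Lemma ee_fac x : bar (ee x) = pl (bar x) /\ ee (ee x) = ee x /\ Lset (ee x).
Proof.
  destruct (fe x) as (I & E1 & E2).
  destruct (bleft (pl (bar x)) (pl (bar x)) (ee x)) as (A1 & A2 & A3); auto.
  all: try apply plI.
  rewrite E1 in A1, A2, A3. rewrite (plus_self _ HA _ (plI _)), E1 in A2.
  rewrite (star_self _ HA _ (plI _)) in A3. unfold Lset. rewrite A1, A3, (star_self _ HA _ (plI _)). auto.
Qed.
Lemma ff_fac x : bar (ff x) = sr (bar x) /\ ff (ff x) = ff x /\ Rset (ff x).
Proof.
  destruct (ff' x) as (I & F1 & F2).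
  destruct (bright (sr (bar x)) (sr (bar x)) (ff x)) as (A1 & A2 & A3); auto.
  all: try apply srI.
  rewrite F1 in A1, A2, A3. rewrite (star_self _ HA _ (srI _)), F1 in A3.
  rewrite (plus_self _ HA _ (srI _)) in A2. unfold Rset. rewrite A1, A2, (plus_self _ HA _ (srI _)). auto.
Qed.

Definition iL (s : S0) : Ls := exist _ (j s) (j_L s).
Definition iR (s : S0) : Rs := exist _ (j s) (j_R s).
Definition barL (x : Ls) : S0 := bar (proj1_sig x).
Definition barR (x : Rs) : S0 := bar (proj1_sig x).
Definition eL (x : Ls) : Ls := exist _ (ee (proj1_sig x)) (proj2 (proj2 (ee_fac _))).
Definition fL (x : Ls) : Ls := iL (sr (barL x)).
Definition eR (a : Rs) : Rs := iR (pl (barR a)).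
Definition fR (a : Rs) : Rs := exist _ (ff (proj1_sig a)) (proj2 (proj2 (ff_fac _))).

Lemma st_ex (a : Rs) (x : Ls) : exists m, j m = proj1_sig a ⋅ proj1_sig x.
Proof.
  destruct a as [a Ha], x as [x Hx]; simpl.
  destruct (HQ (bar a) (bar x) (ff a ⋅ ee x)) as [m Hm]. exists m.
  rewrite <- Hm. transitivity ((j (bar a) ⋅ ff a) ⋅ (ee x ⋅ j (bar x))).
  - an; reflexivity.
  - rewrite <- R_dec2, <- L_dec2; auto.
Qed.
Definition st (a : Rs) (x : Ls) : S0 :=
  epsilon (inhabits (bar (proj1_sig x))) (fun m => j m = proj1_sig a ⋅ proj1_sig x).
Lemma st_spec a x : j (st a x) = proj1_sig a ⋅ proj1_sig x.
Proof. unfold st. apply (epsilon_spec _ (fun m => j m = proj1_sig a ⋅ proj1_sig x)); apply st_ex. Qed.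

Lemma RS_e (x e' : S) s : x = e' ⋅ j s -> e' ⋅ j (pl s) = e' -> RStar x e'.
Proof.
  intros Hx He u v; split; intro E.
  - rewrite Hx, !lmul1_assoc in E. apply (RStar_cancel _ _ _ _ _ (jR' s)) in E.
    rewrite <- !lmul1_assoc, He in E. exact E.
  - rewrite Hx, !lmul1_assoc, E. reflexivity.
Qed.
Lemma LS_f (x e' : S) s : x = e' ⋅ j s -> j (pl s) ⋅ e' = j (pl s) -> LStar x (j (sr s)).
Proof.
  intros Hx He u v; split; intro E.
  - rewrite Hx, !rmul1_assoc in E. apply (f_equal (fun z => j (pl s) ⋅ z)) in E.
    rewrite !sassoc, He, <- !rmul1_assoc, jplj' in E. exact (proj1 (jL' s u v) E).
  - rewrite Hx, !rmul1_assoc. f_equal. exact (proj2 (jL' s u v) E).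
Qed.
Lemma LS_e (a f' : S) s : a = j s ⋅ f' -> j (sr s) ⋅ f' = f' -> LStar a f'.
Proof.
  intros Ha Hf u v; split; intro E.
  - rewrite Ha, !rmul1_assoc in E. apply (LStar_cancel _ _ _ _ _ (jL' s)) in E.
    rewrite <- !rmul1_assoc, Hf in E. exact E.
  - rewrite Ha, !rmul1_assoc, E. reflexivity.
Qed.
Lemma RS_f (a f' : S) s : a = j s ⋅ f' -> f' ⋅ j (sr s) = j (sr s) -> RStar a (j (pl s)).
Proof.
  intros Ha Hf u v; split; intro E.
  - rewrite Ha, !lmul1_assoc in E. apply (f_equal (fun z => z ⋅ j (sr s))) in E.
    rewrite <- !sassoc, Hf, <- !lmul1_assoc, jjsr' in E. exact (proj1 (jR' s u v) E).
  - rewrite Ha, !lmul1_assoc. f_equal. exact (proj2 (jR' s u v) E).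
Qed.

Lemma idemL (g : S) : Lset g -> idem g -> ee g = g /\ idem (bar g).
Proof.
  intros HL Ig. set (q := sr (bar g)).
  assert (Iq : idem q) by apply srI.
  destruct (fe g) as (Ie & E1 & E2).
  assert (LS : LStar g (j q)) by (apply (LS_f g (ee g) (bar g)); auto; apply L_dec2; auto).
  assert (G1 : g ⋅ j q = g) by (apply LStar_idem; auto).
  assert (G2 : j q ⋅ g = j q) by (apply LStar_idem; auto using LStar_sym).
  pose proof (jid q Iq) as Jq.
  destruct (fintro g q g (j q)) as (A1 & A2 & A3); auto;
    rewrite ?(plus_self _ HA _ Iq), ?(star_self _ HA _ Iq); auto.
  rewrite G1; auto.
  split; auto. rewrite A1; auto.
Qed.
Lemma idemR (a : S) : Rset a -> idem a -> ff a = a /\ idem (bar a).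
Proof.
  intros HR Ia. set (p := pl (bar a)).
  assert (Ip : idem p) by apply plI.
  destruct (ff' a) as (If & F1 & F2).
  assert (RS : RStar a (j p)) by (apply (RS_f a (ff a) (bar a)); auto; apply R_dec2; auto).
  assert (G1 : j p ⋅ a = a) by (apply RStar_idem; auto).
  assert (G2 : a ⋅ j p = j p) by (apply RStar_idem; auto using RStar_sym).
  pose proof (jid p Ip) as Jp.
  destruct (fintro a p (j p) a) as (A1 & A2 & A3); auto;
    rewrite ?(plus_self _ HA _ Ip), ?(star_self _ HA _ Ip); auto.
  rewrite Jp, G1; auto.
  split; auto. rewrite A1; auto.
Qed.

Lemma L_uniq_S (g h : S) : Lset g -> Lset h -> idem g -> idem h ->
  h ⋅ g = g -> g ⋅ h = h -> g = h.
Proof.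
  intros Lg Lh Ig Ih Hhg Hgh.
  destruct (idemL g Lg Ig) as [Eg Ip]. destruct (idemL h Lh Ih) as [Eh Ip'].
  set (p := bar g) in *. set (p' := bar h) in *.
  destruct (fe g) as (_ & G1 & G2). destruct (fe h) as (_ & H1 & H2).
  fold p in G1, G2. fold p' in H1, H2.
  rewrite Eg, (plus_self _ HA _ Ip) in G1, G2. rewrite Eh, (plus_self _ HA _ Ip') in H1, H2.
  destruct (HQ p' p g) as [c Hc]. rewrite <- sassoc, G1 in Hc.
  assert (hc : h ⋅ j c = g) by (rewrite <- Hc, sassoc, H1; auto).
  assert (C1 : p' ⋅ c = c).
  { apply Hinj. rewrite Hhom, <- Hc, sassoc, (jid p' Ip'). reflexivity. }
  assert (C2 : p' ⋅ pl c = pl c) by (apply plus_le; auto).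
  assert (C3 : j c ⋅ h = j p') by (rewrite <- Hc, <- sassoc, Hgh; auto).
  assert (C4 : pl c ⋅ p' = p').
  { apply Hinj. rewrite Hhom, <- C3, sassoc, jplj'. reflexivity. }
  assert (Pc : pl c = p').
  { rewrite <- C4, (comm _ HA _ _ (plI c) Ip'), C2. reflexivity. }
  destruct (fintro g c h (j (sr c))) as (A1 & A2 & A3).
  all: try solve [auto | apply jidem, srI | rewrite Pc; auto | apply (jid _ (srI c))
    | rewrite <- hc at 1; rw (jjsr' c); reflexivity | congruence].
Qed.

Lemma R_uniq_S (g h : S) : Rset g -> Rset h -> idem g -> idem h ->
  g ⋅ h = g -> h ⋅ g = h -> g = h.
Proof.
  intros Rg Rh Ig Ih Hgh Hhg.
  destruct (idemR g Rg Ig) as [Eg Ip]. destruct (idemR h Rh Ih) as [Eh Ip'].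
  set (p := bar g) in *. set (p' := bar h) in *.
  destruct (ff' g) as (_ & G1 & G2). destruct (ff' h) as (_ & H1 & H2).
  fold p in G1, G2. fold p' in H1, H2.
  rewrite Eg, (star_self _ HA _ Ip) in G1, G2. rewrite Eh, (star_self _ HA _ Ip') in H1, H2.
  destruct (HQ p p' g) as [c Hc]. rewrite G1 in Hc.
  assert (ch : j c ⋅ h = g) by (rewrite <- Hc, <- sassoc, H1; auto).
  assert (C1 : c ⋅ p' = c).
  { apply Hinj. rewrite Hhom, <- Hc, <- sassoc, (jid p' Ip'). reflexivity. }
  assert (C2 : sr c ⋅ p' = sr c) by (apply star_le; auto).
  assert (C3 : h ⋅ j c = j p') by (rewrite <- Hc, sassoc, Hhg; auto).
  assert (C4 : p' ⋅ sr c = p').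
  { apply Hinj. rewrite Hhom, <- C3, <- sassoc, jjsr'. reflexivity. }
  assert (Sc : sr c = p').
  { rewrite <- C4, (comm _ HA _ _ Ip' (srI c)), C2. reflexivity. }
  destruct (fintro g c (j (pl c)) h) as (A1 & A2 & A3).
  all: try solve [auto | apply jidem, plI | rewrite Sc; auto | apply (jid _ (plI c))
    | rewrite jplj', ch; reflexivity | congruence].
Qed.

Lemma L_ladeq : left_adequate Ls.
Proof.
  split.
  - intros [x Hx]. split.
    + exists (eL (exist _ x Hx)). split.
      * apply sub_idem'. simpl. apply fe.
      * apply sub_RStar. simpl. apply (RS_e x (ee x) (bar x)); [apply L_dec2; auto| apply fe].
    + exists (fL (exist _ x Hx)). split.
      * apply sub_idem'. simpl. apply jidem, srI.
      * apply sub_LStar. simpl. apply (LS_f x (ee x) (bar x)); [apply L_dec2; auto| apply fe].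
  - intros a g h Ig Ih Hg Hh.
    assert (H : RStar g h) by (eapply RStar_trans; [apply RStar_sym, Hg| exact Hh]).
    assert (H1 : h ⋅ g = g) by (apply (RStar_idem _ g h Ih H)).
    assert (H2 : g ⋅ h = h) by (apply (RStar_idem _ h g Ig (RStar_sym _ _ _ H))).
    apply (f_equal (@proj1_sig _ _)) in H1, H2.
    apply sig_eq. apply L_uniq_S; [exact (proj2_sig g)| exact (proj2_sig h)| apply sub_idem; exact Ig
      | apply sub_idem; exact Ih| exact H1| exact H2].
Qed.
Lemma R_radeq : right_adequate Rs.
Proof.
  split.
  - intros [x Hx]. split.
    + exists (eR (exist _ x Hx)). split.
      * apply sub_idem'. simpl. apply jidem, plI.
      * apply sub_RStar. simpl. apply (RS_f x (ff x) (bar x)); [apply R_dec2; auto| apply ff'].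
    + exists (fR (exist _ x Hx)). split.
      * apply sub_idem'. simpl. apply ff'.
      * apply sub_LStar. simpl. apply (LS_e x (ff x) (bar x)); [apply R_dec2; auto| apply ff'].
  - intros a g h Ig Ih Hg Hh.
    assert (H : LStar g h) by (eapply LStar_trans; [apply LStar_sym, Hg| exact Hh]).
    assert (H1 : g ⋅ h = g) by (apply (LStar_idem _ g h Ih H)).
    assert (H2 : h ⋅ g = h) by (apply (LStar_idem _ h g Ig (LStar_sym _ _ _ H))).
    apply (f_equal (@proj1_sig _ _)) in H1, H2.
    apply sig_eq. apply R_uniq_S; [exact (proj2_sig g)| exact (proj2_sig h)| apply sub_idem; exact Ig
      | apply sub_idem; exact Ih| exact H1| exact H2].
Qed.

Let bunique := bar_unique S0 S j bar ee ff Huniq Hfac.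

Lemma sub_fact_transfer (P : S -> Prop) Hc (iP : S0 -> subsg S P Hc)
  (HiP : forall s, proj1_sig (iP s) = j s) x s E F :
  factors_through S0 (subsg S P Hc) iP x s E F ->
  factors_through S0 S j (proj1_sig x) s (proj1_sig E) (proj1_sig F).
Proof.
  intros (IE & IF & Hx & [p [Hp GL]] & [q [Hq GR]]).
  repeat split.
  - apply sub_idem; auto.
  - apply sub_idem; auto.
  - rewrite Hx at 1. simpl. rewrite HiP. reflexivity.
  - exists p. split; auto. rewrite <- HiP. apply sub_GL; auto.
  - exists q. split; auto. rewrite <- HiP. apply sub_GR; auto.
Qed.

Lemma L_fact (x : Ls) : factors_through S0 Ls iL x (barL x) (eL x) (fL x).
Proof.
  destruct x as [x Hx]. unfold barL, eL, fL; simpl.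
  destruct (fe x) as (I & E1 & E2).
  repeat split.
  - apply sub_idem'; exact I.
  - apply sub_idem'; apply jidem, srI.
  - apply sig_eq; simpl. rewrite <- sassoc, jjsr'. apply L_dec2; auto.
  - exists (pl (bar x)). split; [apply plus_spec; auto|]. apply GL_intro; apply sig_eq; simpl; auto.
  - exists (sr (bar x)). split; [apply star_spec; auto|]. apply GR_intro; apply sig_eq; simpl;
      apply (jid _ (srI _)).
Qed.
Lemma R_fact (a : Rs) : factors_through S0 Rs iR a (barR a) (eR a) (fR a).
Proof.
  destruct a as [a Ha]. unfold barR, eR, fR; simpl.
  destruct (ff' a) as (I & F1 & F2).
  repeat split.
  - apply sub_idem'; apply jidem, plI.
  - apply sub_idem'; exact I.
  - apply sig_eq; simpl. rewrite jplj'. apply R_dec2; auto.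
  - exists (pl (bar a)). split; [apply plus_spec; auto|]. apply GL_intro; apply sig_eq; simpl;
      apply (jid _ (plI _)).
  - exists (sr (bar a)). split; [apply star_spec; auto|]. apply GR_intro; apply sig_eq; simpl; auto.
Qed.

Lemma L_trans : adequate_transversal iL.
Proof.
  split; [|split; [|split; [exact HA|split]]].
  - intros s t; apply sig_eq; simpl; apply Hhom.
  - intros s t H; apply Hinj; exact (f_equal (@proj1_sig _ _) H).
  - intros s; split.
    + exists (pl s); split; [apply plI| apply sub_RStar; apply jR'].
    + exists (sr s); split; [apply srI| apply sub_LStar; apply jL'].
  - intros x. exists (barL x). split.
    + exists (eL x), (fL x). apply L_fact.
    + intros s' [E' [F' H]]. apply (sub_fact_transfer _ _ iL (fun _ => eq_refl)) in H.
      unfold barL. eapply bunique; eauto.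
Qed.
Lemma R_trans : adequate_transversal iR.
Proof.
  split; [|split; [|split; [exact HA|split]]].
  - intros s t; apply sig_eq; simpl; apply Hhom.
  - intros s t H; apply Hinj; exact (f_equal (@proj1_sig _ _) H).
  - intros s; split.
    + exists (pl s); split; [apply plI| apply sub_RStar; apply jR'].
    + exists (sr s); split; [apply srI| apply sub_LStar; apply jL'].
  - intros x. exists (barR x). split.
    + exists (eR x), (fR x). apply R_fact.
    + intros s' [E' [F' H]]. apply (sub_fact_transfer _ _ iR (fun _ => eq_refl)) in H.
      unfold barR. eapply bunique; eauto.
Qed.
Lemma L_qi : quasi_ideal iL.
Proof. intros s t x. destruct (HQ s t (proj1_sig x)) as [u Hu]. exists u. apply sig_eq. exact Hu. Qed.
Lemma R_qi : quasi_ideal iR.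
Proof. intros s t x. destruct (HQ s t (proj1_sig x)) as [u Hu]. exists u. apply sig_eq. exact Hu. Qed.

Lemma st_axioms : star_axioms S0 Ls Rs iL iR barL eL barR fR st.
Proof.
  split; [|split].
  - intros [y Hy] [z Hz] [a Ha] [b Hb] Hyb. unfold barL, barR in Hyb; simpl in Hyb.
    apply Hinj. rewrite !st_spec. simpl. rewrite !st_spec. simpl.
    assert (K : y ⋅ ff b = ee y ⋅ b).
    { transitivity (ee y ⋅ j (bar y) ⋅ ff b).
      - f_equal. apply L_dec2; auto.
      - rewrite Hyb, <- sassoc, <- R_dec2; auto. }
    rw K. reflexivity.
  - intros s x. apply sig_eq. simpl. apply st_spec.
  - intros a t. apply sig_eq. simpl. apply st_spec.
Qed.

Lemma psiL_in x : Lset (ee x ⋅ j (bar x)).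
Proof.
  destruct (fe x) as (I & E1 & E2).
  destruct (bleft (bar x) (pl (bar x)) (ee x)) as (A1 & A2 & A3); auto using plus_l.
  unfold Lset. rewrite A1, A3. reflexivity.
Qed.
Lemma psiR_in x : Rset (j (bar x) ⋅ ff x).
Proof.
  destruct (ff' x) as (I & F1 & F2).
  destruct (bright (bar x) (sr (bar x)) (ff x)) as (A1 & A2 & A3); auto using star_r.
  unfold Rset. rewrite A1, A2. reflexivity.
Qed.
Definition psi (x : S) : Ls * Rs :=
  (exist _ (ee x ⋅ j (bar x)) (psiL_in x), exist _ (j (bar x) ⋅ ff x) (psiR_in x)).

Lemma psiL_fac x : bar (ee x ⋅ j (bar x)) = bar x /\ ee (ee x ⋅ j (bar x)) = ee x.
Proof.
  destruct (fe x) as (I & E1 & E2).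
  destruct (bleft (bar x) (pl (bar x)) (ee x)) as (A1 & A2 & A3); auto using plus_l.
  rewrite A2, E1. auto.
Qed.
Lemma psiR_fac x : bar (j (bar x) ⋅ ff x) = bar x /\ ff (j (bar x) ⋅ ff x) = ff x.
Proof.
  destruct (ff' x) as (I & F1 & F2).
  destruct (bright (bar x) (sr (bar x)) (ff x)) as (A1 & A2 & A3); auto using star_r.
  rewrite A3, F1. auto.
Qed.

Lemma psi_iso : iso_onto S (inT S0 Ls Rs barL barR) (tmul S0 Ls Rs iL iR eL fR st) psi.
Proof.
  split; [|split; [|split]].
  - intros u v H. unfold psi in H. injection H as H1 H2.
    assert (Eb : bar u = bar v).
    { rewrite <- (proj1 (psiL_fac u)), <- (proj1 (psiL_fac v)), H1. reflexivity. }
    rewrite Eb in H1, H2.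
    assert (Ee : ee u = ee v).
    { apply (RStar_cancel _ _ _ _ _ (jR' (bar v))) in H1.
      destruct (fe u) as (_ & E1 & _). destruct (fe v) as (_ & E1' & _).
      rewrite Eb in E1. rewrite E1, E1' in H1. exact H1. }
    assert (Ef : ff u = ff v).
    { apply (LStar_cancel _ _ _ _ _ (jL' (bar v))) in H2.
      destruct (ff' u) as (_ & F1 & _). destruct (ff' v) as (_ & F1' & _).
      rewrite Eb in F1. rewrite F1, F1' in H2. exact H2. }
    rewrite (feq u), (feq v), Eb, Ee, Ef. reflexivity.
  - intros u. unfold inT, psi, barL, barR; simpl.
    rewrite (proj1 (psiL_fac u)), (proj1 (psiR_fac u)). reflexivity.
  - intros [[l Hl] [a Ha]] Hp. unfold inT, barL, barR in Hp; simpl in Hp.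
    set (s := bar l) in *.
    destruct (fe l) as (I1 & E1 & E2). destruct (ff' a) as (I2 & F1 & F2).
    rewrite <- Hp in F1, F2.
    destruct (fintro (ee l ⋅ j s ⋅ ff a) s (ee l) (ff a)) as (A1 & A2 & A3); auto.
    exists (ee l ⋅ j s ⋅ ff a). unfold psi. f_equal; apply sig_eq; simpl.
    + rewrite A1, A2. symmetry. apply L_dec2; auto.
    + rewrite A1, A3, Hp. symmetry. apply R_dec2; auto.
  - intros x y. unfold psi, tmul; simpl.
    destruct (prod_fac x y) as (m & Hm & Exy & B & E & F & M1 & M2).
    assert (Sm : st (exist _ (j (bar x) ⋅ ff x) (psiR_in x)) (exist _ (ee y ⋅ j (bar y)) (psiL_in y)) = m).
    { apply Hinj. rewrite st_spec, Hm. simpl. an. reflexivity. }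
    f_equal; apply sig_eq; simpl; rewrite Sm.
    + rewrite B, E, (proj2 (psiL_fac x)), <- sassoc, jplj'. reflexivity.
    + rewrite B, F, (proj2 (psiR_fac y)), sassoc, jjsr'. reflexivity.
Qed.

Lemma part2_main : exists (S0' L R : semigroup) (iL : S0' -> L) (iR : S0' -> R)
       (barL : L -> S0') (eL fL : L -> L) (barR : R -> S0') (eR fR : R -> R)
       (st : R -> L -> S0'),
       construction_setting S0' L R iL iR barL eL fL barR eR fR st /\
       exists psi : S -> L * R,
         iso_onto S (inT S0' L R barL barR) (tmul S0' L R iL iR eL fR st) psi.
Proof.
  exists S0, Ls, Rs, iL, iR, barL, eL, fL, barR, eR, fR, st. split.
  - split; [exact HA|]. split; [apply L_ladeq|]. split; [apply R_radeq|].
    split; [apply L_trans|]. split; [apply L_qi|]. split; [apply R_trans|]. split; [apply R_qi|].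
    split; [intros x; apply L_fact|]. split; [intros x; apply R_fact|]. apply st_axioms.
  - exists psi. apply psi_iso.
Qed.
End Part2.

Theorem theorem2p8 :
  (forall (S0 L R : semigroup) (iL : S0 -> L) (iR : S0 -> R)
     (barL : L -> S0) (eL fL : L -> L) (barR : R -> S0) (eR fR : R -> R)
     (st : R -> L -> S0),
     construction_setting S0 L R iL iR barL eL fL barR eR fR st ->
     exists (T : semigroup) (phi : T -> L * R),
       iso_onto T (inT S0 L R barL barR) (tmul S0 L R iL iR eL fR st) phi /\
       abundant T /\
       exists j : S0 -> T,
         adequate_transversal j /\ quasi_ideal j /\
         forall s : S0, phi (j s) = (iL s, iR s))
  /\
  (forall (S S0 : semigroup) (j : S0 -> S),
     abundant S -> adequate_transversal j -> quasi_ideal j ->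
     exists (S0' L R : semigroup) (iL : S0' -> L) (iR : S0' -> R)
       (barL : L -> S0') (eL fL : L -> L) (barR : R -> S0') (eR fR : R -> R)
       (st : R -> L -> S0'),
       construction_setting S0' L R iL iR barL eL fL barR eR fR st /\
       exists psi : S -> L * R,
         iso_onto S (inT S0' L R barL barR) (tmul S0' L R iL iR eL fR st) psi).
Proof.
  split.
  - intros S0 L R iL iR barL eL fL barR eR fR st H.
    destruct H as (HA & HLad & HRad & HTL & HQL & HTR & HQR & HfL & HfR & HS).
    destruct HTL as (Lhom & Linj & _ & Lstar & Luniq).
    destruct HTR as (Rhom & Rinj & _ & Rstar & Runiq).
    destruct HS as (S1 & S2a & S2b).
    eapply part1_main; eassumption.
  - intros S S0 j _ HT HQ. destruct HT as (Hhom & Hinj & HA & Hstar & Huniq).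
    eapply part2_main; eassumption.
Qed.
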